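(* Let $L$ be an $R_0$-algebra. Given any chain of fated filters $F_0\subset F_1\subset\cdots\subset F_n=L$ of $L$, there exists an $(\in,\in\vee q)$-fuzzy fated filter $\mu$ of $L$ whose level fated filters $U(\mu;t)=\{x\in L\mid\mu(x)\ge t\}$, $t\in(0,0.5]$, are precisely the members $F_0,F_1,\dots,F_n$ of the chain, and such that $U(\mu;0.5)=F_0$.
   Context: An $R_0$-algebra is a bounded distributive lattice $(L,\wedge,\vee,0,1)$ with an order-reversing involution $\neg$ and a binary operation $\to$ such that for all $x,y,z\in L$: $x\to y=\neg y\to\neg x$; $1\to x=x$; $(y\to z)\wedge((x\to y)\to(x\to z))=y\to z$; $x\to(y\to z)=y\to(x\to z)$; $x\to(y\vee z)=(x\to y)\vee(x\to z)$; $(x\to y)\vee((x\to y)\to(\neg x\vee y))=1$. A fated filter of $L$ is a nonempty subset $A\subseteq L$ with $1\in A$ such that for all $x,y\in L$ and $a\in A$, $a\to((x\to y)\to x)\in A$ implies $x\in A$. For $x\in L$, $t\in(0,1]$ and a fuzzy subset $\mu:L\to[0,1]$: $x_t\in\mu$ iff $\mu(x)\ge t$; $x_t\,q\,\mu$ iff $\mu(x)+t>1$; $x_t\in\vee q\,\mu$ iff $x_t\in\mu$ or $x_t\,q\,\mu$. $\mu$ is an $(\in,\in\vee q)$-fuzzy fated filter of $L$ if (1) for all $x\in L$, $t\in(0,1]$: $x_t\in\mu\Rightarrow 1_t\in\vee q\,\mu$; and (2) for all $x,a,y\in L$, $t,s\in(0,1]$: if $(a\to((x\to y)\to x))_t\in\mu$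 and $a_s\in\mu$ then $x_{\min\{t,s\}}\in\vee q\,\mu$. *)

(* Defs.v *)
From Stdlib Require Export Reals.
Open Scope R_scope.

Record R0_algebra := {
  carrier :> Type;
  meet : carrier -> carrier -> carrier;
  join : carrier -> carrier -> carrier;
  bot : carrier;
  top : carrier;
  neg : carrier -> carrier;
  imp : carrier -> carrier -> carrier;
  meetC : forall x y, meet x y = meet y x;
  joinC : forall x y, join x y = join y x;
  meetA : forall x y z, meet x (meet y z) = meet (meet x y) z;
  joinA : forall x y z, join x (join y z) = join (join x y) z;
  meet_absorb : forall x y, meet x (join x y) = x;
  join_absorb : forall x y, join x (meet x y) = x;
  meet_joinDr : forall x y z, meet x (join y z) = join (meet x y) (meet x z);
  join_bot : forall x, join bot x = x;
  meet_top : forall x, meet top x = x;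
  (* order-reversing involution (x <= y iff meet x y = x) *)
  negK : forall x, neg (neg x) = x;
  neg_rev : forall x y, meet x y = x -> meet (neg y) (neg x) = neg y;
  R0_1 : forall x y, imp x y = imp (neg y) (neg x);
  R0_2 : forall x, imp top x = x;
  R0_3 : forall x y z, meet (imp y z) (imp (imp x y) (imp x z)) = imp y z;
  R0_4 : forall x y z, imp x (imp y z) = imp y (imp x z);
  R0_5 : forall x y z, imp x (join y z) = join (imp x y) (imp x z);
  R0_6 : forall x y, join (imp x y) (imp (imp x y) (join (neg x) y)) = top
}.

Arguments meet {_}. Arguments join {_}. Arguments bot {_}. Arguments top {_}.
Arguments neg {_}. Arguments imp {_}.

Definition fated_filter (L : R0_algebra) (A : L -> Prop) : Prop :=
  (exists a, A a) /\ A top /\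
  forall x y a : L, A a -> A (imp a (imp (imp x y) x)) -> A x.

Definition fin {L : R0_algebra} (x : L) (t : R) (mu : L -> R) : Prop := mu x >= t.
Definition fq {L : R0_algebra} (x : L) (t : R) (mu : L -> R) : Prop := mu x + t > 1.
Definition fin_or_q {L : R0_algebra} (x : L) (t : R) (mu : L -> R) : Prop :=
  fin x t mu \/ fq x t mu.

Definition fuzzy_subset {L : R0_algebra} (mu : L -> R) : Prop :=
  forall x, 0 <= mu x <= 1.

Definition in_inq_fuzzy_fated_filter (L : R0_algebra) (mu : L -> R) : Prop :=
  fuzzy_subset mu /\
  (forall (x : L) (t : R), 0 < t <= 1 -> fin x t mu -> fin_or_q top t mu) /\
  (forall (x a y : L) (t s : R), 0 < t <= 1 -> 0 < s <= 1 ->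
     fin (imp a (imp (imp x y) x)) t mu -> fin a s mu ->
     fin_or_q x (Rmin t s) mu).

Definition level {L : R0_algebra} (mu : L -> R) (t : R) : L -> Prop :=
  fun x => mu x >= t.

Definition set_eq {L : R0_algebra} (A B : L -> Prop) : Prop :=
  forall x, A x <-> B x.

(* Main.v *)
Require Import Defs.
From Stdlib Require Import Reals Lra Lia Classical ClassicalEpsilon Wf_nat.
Open Scope R_scope.

Definition tv (i : nat) : R := / (2 * INR (S i)).

Lemma tv_pos i : 0 < tv i.
Proof. unfold tv. apply Rinv_0_lt_compat. pose proof (lt_0_INR (S i) ltac:(lia)). lra. Qed.

Lemma tv_half i : tv i <= / 2.
Proof.
  unfold tv. apply Rinv_le_contravar; [lra|].
  pose proof (le_INR 1 (S i) ltac:(lia)) as H. rewrite INR_1 in H. lra.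
Qed.

Lemma tv_0 : tv 0 = / 2.
Proof. unfold tv. rewrite INR_1. f_equal. lra. Qed.

Lemma tv_le a b : tv a >= tv b <-> (a <= b)%nat.
Proof.
  unfold tv. split.
  - intro H. destruct (Nat.le_gt_cases a b) as [h|h]; auto. exfalso.
    assert (/ (2 * INR (S a)) < / (2 * INR (S b))); [|lra].
    pose proof (lt_0_INR (S a) ltac:(lia)). pose proof (lt_0_INR (S b) ltac:(lia)).
    apply Rinv_lt_contravar. nra.
    pose proof (lt_INR (S b) (S a) ltac:(lia)). lra.
  - intro H. apply Rle_ge. apply Rinv_le_contravar.
    pose proof (lt_0_INR (S a) ltac:(lia)). lra.
    pose proof (le_INR (S a) (S b) ltac:(lia)). lra.
Qed.

Lemma max_exists (P : nat -> Prop) (m : nat) : P 0%nat ->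
  exists j, (j <= m)%nat /\ P j /\ forall i, (i <= m)%nat -> P i -> (i <= j)%nat.
Proof.
  intro H0. induction m as [|m IH].
  - exists 0%nat. split; [lia|split; [auto|intros; lia]].
  - destruct IH as [j [Hj [Pj Hm]]].
    destruct (classic (P (S m))) as [h|h].
    + exists (S m). repeat split; auto.
    + exists j. repeat split; auto. intros i Hi Pi.
      destruct (Nat.eq_dec i (S m)); [subst; contradiction|]. apply Hm; auto; lia.
Qed.

Theorem corollary3p27 (L : R0_algebra) (n : nat) (F : nat -> L -> Prop)
  (Hfated : forall i, (i <= n)%nat -> fated_filter L (F i))
  (Hincl : forall i, (i < n)%nat -> forall x, F i x -> F (S i) x)
  (Hproper : forall i, (i < n)%nat -> exists x, F (S i) x /\ ~ F i x)
  (Htop : forall x : L, F n x) :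
  exists mu : L -> R,
    in_inq_fuzzy_fated_filter L mu /\
    (forall t, 0 < t <= / 2 -> exists i, (i <= n)%nat /\ set_eq (level mu t) (F i)) /\
    (forall i, (i <= n)%nat -> exists t, 0 < t <= / 2 /\ set_eq (level mu t) (F i)) /\
    set_eq (level mu (/ 2)) (F 0%nat).
Proof.
  assert (Hmono : forall i j x, (i <= j)%nat -> (j <= n)%nat -> F i x -> F j x).
  { intros i j x Hij. induction Hij; intros Hn Hx; auto.
    apply Hincl; [lia|]. apply IHHij; auto; lia. }
  assert (HK : forall x, {k : nat | F k x /\ forall i, F i x -> (k <= i)%nat}).
  { intro x. apply constructive_indefinite_description.
    destruct (dec_inh_nat_subset_has_unique_least_element (fun k => F k x))
      as [k [[Hk1 Hk2] _]].
    - intro k; apply classic.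
    - exists n; auto.
    - exists k; auto. }
  set (K := fun x => proj1_sig (HK x)).
  assert (K1 : forall x, F (K x) x) by (intro x; exact (proj1 (proj2_sig (HK x)))).
  assert (K2 : forall x i, F i x -> (K x <= i)%nat) by (intro x; exact (proj2 (proj2_sig (HK x)))).
  assert (Kn : forall x, (K x <= n)%nat) by (intro x; apply K2; auto).
  assert (KF : forall x i, (i <= n)%nat -> (F i x <-> (K x <= i)%nat)).
  { intros x i Hi; split; intro H; [apply K2; auto | apply Hmono with (K x); auto]. }
  exists (fun x => tv (K x)).
  assert (Hlev : forall i, (i <= n)%nat -> set_eq (level (fun x => tv (K x)) (tv i)) (F i)).
  { intros i Hi x. unfold level. rewrite tv_le. rewrite KF; auto. tauto. }
  split; [|split; [|split]].
  - split; [|split].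
    + intro x. pose proof (tv_pos (K x)). pose proof (tv_half (K x)). lra.
    + intros x t Ht _. unfold fin_or_q, fin, fq.
      assert (K top = 0%nat).
      { assert (F 0%nat top) by (apply (Hfated 0%nat ltac:(lia))). pose proof (K2 _ _ H). lia. }
      rewrite H, tv_0. destruct (Rle_lt_dec t (/2)); [left|right]; lra.
    + intros x a y t s Ht Hs H1 H2. left. unfold fin in *.
      set (j := Nat.max (K (imp a (imp (imp x y) x))) (K a)).
      assert (Hj : (j <= n)%nat) by (pose proof (Kn a); pose proof (Kn (imp a (imp (imp x y) x))); lia).
      assert (Fa : F j a) by (apply Hmono with (K a); auto; lia).
      assert (Fb : F j (imp a (imp (imp x y) x))) by (apply Hmono with (K (imp a (imp (imp x y) x))); auto; lia).
      destruct (Hfated j Hj) as [_ [_ Hff]].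
      pose proof (Hff x y a Fa Fb) as Fx. apply K2 in Fx.
      apply Rle_ge. apply Rle_trans with (tv j).
      * unfold j. destruct (Nat.le_ge_cases (K (imp a (imp (imp x y) x))) (K a)).
        -- rewrite Nat.max_r by auto. apply Rle_trans with s. apply Rmin_r. lra.
        -- rewrite Nat.max_l by auto. apply Rle_trans with t. apply Rmin_l. lra.
      * apply Rge_le. apply tv_le. auto.
  - intros t Ht.
    destruct (max_exists (fun i => tv i >= t) n) as [j [Hj [Pj Hm]]].
    { rewrite tv_0. lra. }
    exists j. split; auto. intro x. unfold level. rewrite KF; auto. split; intro H.
    + apply Hm; auto.
    + apply Rge_trans with (tv j); auto. apply tv_le; auto.
  - intros i Hi. exists (tv i). split; [split; [apply tv_pos|apply tv_half]|]. apply Hlev; auto.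
  - rewrite <- tv_0. apply Hlev. lia.
Qed.
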